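(* Let $\mathcal{C}$ be a simplicial complex on $[n]$, with $\mathcal{A}_{\mathcal{C}}$ indexed by $\{0,1\}$-vectors. Then the set \[K=\Big\{\sum_{\mathbf{j}\in\{0,1\}^S}(-1)^{\|\mathbf{j}\|_1}e_{\mathbf{i},\mathbf{j}} : S \text{ a minimal non-face of } \mathcal{C},\ \mathbf{i}\in\{0,1\}^{[n]\setminus S}\Big\}\] spans $\ker(\mathcal{A}_{\mathcal{C}})$. Furthermore, if $M'$ is the matrix whose columns are the elements of $K$, then multiplying a suitable set of rows and columns of $M'$ by $-1$ yields the matrix $M$ whose columns are the vectors $\sum_{\mathbf{j}\in\{0,1\}^S}e_{\mathbf{i},\mathbf{j}}$, for $S$ a minimal non-face of $\mathcal{C}$ and $\mathbf{i}\in\{0,1\}^{[n]\setminus S}$ (with columns indexed in the same way).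
   Context: A simplicial complex on $[n]$ is a family of subsets of $[n]$ closed under subsets; facets are inclusion-maximal faces; a minimal non-face is a subset of $[n]$ not in $\mathcal{C}$ all of whose proper subsets are in $\mathcal{C}$. Here $\mathcal{A}_{\mathcal{C}}$ is the $0/1$ matrix with columns indexed by $\mathbf{k}\in\{0,1\}^n$ and rows indexed by pairs $(F,\mathbf{e})$, $F$ a facet, $\mathbf{e}\in\{0,1\}^F$, with entry $1$ iff $\mathbf{e}=\mathbf{k}|_F$. For $S\subseteq[n]$, $\mathbf{j}\in\{0,1\}^S$ and $\mathbf{i}\in\{0,1\}^{[n]\setminus S}$, $e_{\mathbf{i},\mathbf{j}}\in\mathbb{R}^{\{0,1\}^n}$ is the standard basis vector at the index $\mathbf{k}$ with $\mathbf{k}|_S=\mathbf{j}$ and $\mathbf{k}|_{[n]\setminus S}=\mathbf{i}$. $\|\mathbf{j}\|_1$ is the number of ones in $\mathbf{j}$. *)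

(* Defs.v *)
From mathcomp Require Import all_boot all_order all_algebra.
Set Implicit Arguments. Unset Strict Implicit. Unset Printing Implicit Defensive.
Import Order.TTheory GRing.Theory Num.Theory.
Local Open Scope ring_scope.

(* Vertex set [n] = 'I_n.  A 0/1 vector indexed by [n] (or a subset of it) is a
   {ffun 'I_n -> bool}; a vector in {0,1}^F (F a subset of [n]) is represented
   by an ffun that is false outside F. *)
Notation bvec n := {ffun 'I_n -> bool}.

Definition simplicial_complex n (C : {set {set 'I_n}}) : Prop :=
  forall A B : {set 'I_n}, A \in C -> B \subset A -> B \in C.

Definition facet n (C : {set {set 'I_n}}) (F : {set 'I_n}) : Prop :=
  F \in C /\ forall G, G \in C -> F \subset G -> G = F.

Definition min_nonface n (C : {set {set 'I_n}}) (S : {set 'I_n}) : Prop :=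
  S \notin C /\ forall T : {set 'I_n}, T \proper S -> T \in C.

Definition supported_on n (F : {set 'I_n}) (e : bvec n) : Prop :=
  forall x, x \notin F -> e x = false.

(* entry of A_C at row (F,e) and column k : 1 iff e = k|_F *)
Definition AC_entry (R : realFieldType) n (F : {set 'I_n}) (e k : bvec n) : R :=
  if [forall x in F, e x == k x] then 1 else 0.

Definition in_ker_AC (R : realFieldType) n (C : {set {set 'I_n}})
  (v : bvec n -> R) : Prop :=
  forall (F : {set 'I_n}) (e : bvec n), facet C F -> supported_on F e ->
    \sum_(k : bvec n) AC_entry R F e k * v k = 0.

Definition e_ij (R : realFieldType) n (S : {set 'I_n}) (i j : bvec n) (k : bvec n) : R :=
  if [forall x, k x == (if x \in S then j x else i x)] then 1 else 0.

Definition norm1 n (j : bvec n) : nat := #|[set x | j x]|.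

(* index set of K and M: pairs (S,i), S a minimal non-face, i in {0,1}^([n]\S) *)
Definition gen_idx n (C : {set {set 'I_n}}) (g : {set 'I_n} * bvec n) : Prop :=
  min_nonface C g.1 /\ supported_on (~: g.1) g.2.

Definition gen_idxb n (C : {set {set 'I_n}}) (g : {set 'I_n} * bvec n) : bool :=
  [&& g.1 \notin C, [forall T : {set 'I_n}, (T \proper g.1) ==> (T \in C)]
    & [forall x, (x \in g.1) ==> ~~ g.2 x]].

Definition Kvec (R : realFieldType) n (S : {set 'I_n}) (i : bvec n) (k : bvec n) : R :=
  \sum_(j : bvec n | [forall x, (x \notin S) ==> ~~ j x])
     (-1) ^+ norm1 j * e_ij R S i j k.

Definition Mvec (R : realFieldType) n (S : {set 'I_n}) (i : bvec n) (k : bvec n) : R :=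
  \sum_(j : bvec n | [forall x, (x \notin S) ==> ~~ j x]) e_ij R S i j k.

(* Main.v *)
Require Import Defs.
From mathcomp Require Import all_boot all_order all_algebra.
From mathcomp Require Import ring lra zify.
Set Implicit Arguments. Unset Strict Implicit. Unset Printing Implicit Defensive.
Import Order.TTheory GRing.Theory Num.Theory.
Local Open Scope ring_scope.

Section H.
Variables (R : realFieldType) (n : nat).
Implicit Types (S F : {set 'I_n}) (i j k : bvec n).

Definition kset k : {set 'I_n} := [set x | k x].

Definition condk S i k := [forall x, (x \notin S) ==> (k x == i x)].

Lemma sum_eij S i k (f : bvec n -> R) :
  \sum_(j : bvec n | [forall x, (x \notin S) ==> ~~ j x]) f j * e_ij R S i j k =
  if condk S i k then f [ffun x => (x \in S) && k x] else 0.
Proof.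
rewrite /condk; case: ifP => [/forallP cnd | /negbT/forallPn [x0 /negP hx0]].
  have s0 : [forall x, (x \notin S) ==> ~~ [ffun x => (x \in S) && k x] x].
    by apply/forallP => x; rewrite ffunE; case: (x \in S).
  rewrite (bigD1 _ s0) /= big1 ?addr0.
    rewrite /e_ij; case: ifP; first by rewrite mulr1.
    move/negbT/forallPn => [x /negP []]; rewrite ffunE.
    case: ifP => xS; first by rewrite xS.
    by have := cnd x; rewrite xS.
  move=> j /andP [/forallP sj nj]; rewrite /e_ij; case: ifP; last by rewrite mulr0.
  move/forallP => h; case/negP: nj; apply/eqP/ffunP => x; rewrite ffunE.
  have := h x; have := sj x; case: (x \in S) => /=.
    by move=> _ /eqP ->.
  by move=> /negbTE ->.
apply: big1 => j _; rewrite /e_ij; case: ifP; last by rewrite mulr0.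
move/forallP => h; case: hx0; apply/implyP => xS; have := h x0.
by rewrite (negbTE xS).
Qed.

Lemma KvecE S i k : Kvec R S i k =
  if condk S i k then (-1) ^+ #|S :&: kset k| else 0.
Proof.
rewrite /Kvec sum_eij; case: ifP => // _; congr (_ ^+ _).
by rewrite /norm1; apply: eq_card => x; rewrite !inE ffunE.
Qed.

Lemma MvecE S i k : Mvec R S i k = if condk S i k then 1 else 0.
Proof.
rewrite /Mvec -(sum_eij S i k (fun _ => 1)); apply: eq_bigr => j _; by rewrite mul1r.
Qed.

Lemma sign_part S i k : (forall x, x \in S -> i x = false) ->
  (-1) ^+ odd #|kset k| * (-1) ^+ odd #|kset i| * Kvec R S i k = Mvec R S i k.
Proof.
move=> iS; rewrite KvecE MvecE; case: ifP => [/forallP cnd|_]; last by rewrite mulr0.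
have -> : kset i = kset k :\: S.
  apply/setP => x; rewrite !inE; case xS: (x \in S) => /=; first by rewrite iS.
  by have := cnd x; rewrite xS /= => /eqP ->.
rewrite -(cardsID S (kset k)) setIC oddD signr_addb.
rewrite -[X in _ * X]signr_odd.
by case: (odd _); case: (odd _); rewrite /= ?expr0 ?expr1 ?mulr1 ?mulN1r ?opprK ?mul1r ?mulrNN ?mulr1.
Qed.

Lemma ker_part (C : {set {set 'I_n}}) S i F e :
  simplicial_complex C -> S \notin C -> facet C F ->
  \sum_(k : bvec n) AC_entry R F e k * Kvec R S i k = 0.
Proof.
move=> sc SC [FC _].
have /subsetPn [x0 x0S x0F] : ~~ (S \subset F).
  by apply/negP => sSF; move/negP: SC; apply; apply: sc sSF.
pose phi (k : bvec n) := [ffun y => if y == x0 then ~~ k y else k y].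
have phiK : involutive phi.
  by move=> k; apply/ffunP => y; rewrite !ffunE; case: eqP => // ->; rewrite negbK.
have hA k : AC_entry R F e (phi k) = AC_entry R F e k.
  rewrite /AC_entry; congr (if _ then _ else _); apply: eq_forallb => x.
  rewrite ffunE; have [->|nx] := eqVneq x x0; first by rewrite (negbTE x0F).
  by [].
have hK k : Kvec R S i (phi k) = - Kvec R S i k.
  rewrite !KvecE /condk.
  have -> : [forall x, (x \notin S) ==> (phi k x == i x)] =
            [forall x, (x \notin S) ==> (k x == i x)].
    apply: eq_forallb => x; rewrite ffunE; have [->|nx] := eqVneq x x0; first by rewrite x0S.
    by [].
  case: ifP => _; last by rewrite oppr0.
  case kx0: (k x0).
    have -> : S :&: kset (phi k) = (S :&: kset k) :\ x0.
      apply/setP => y; rewrite !inE ffunE; case: eqP => [->|]; first by rewrite kx0 andbF.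
      by [].
    by rewrite [in RHS](cardsD1 x0) !inE x0S kx0 /= exprS mulN1r opprK.
  have -> : S :&: kset (phi k) = x0 |: (S :&: kset k).
    apply/setP => y; rewrite !inE ffunE; case: eqP => [->|]; first by rewrite kx0 x0S.
    by [].
  by rewrite cardsU1 !inE kx0 andbF /= exprS mulN1r.
set s := \sum_k _.
have : s = - s.
  rewrite /s [LHS](reindex_inj (can_inj phiK)) /= -sumrN; apply: eq_bigr => k _.
  by rewrite hA hK mulrN.
move=> h; lra.
Qed.

Lemma kset_inj k k' : kset k = kset k' -> k = k'.
Proof. by move=> h; apply/ffunP => x; move/setP/(_ x): h; rewrite !inE. Qed.

Variable C : {set {set 'I_n}}.

Definition PS k (T : {set 'I_n}) := (T \subset kset k) && (T \notin C).
Definition minS k : {set 'I_n} := odflt set0 [pick T | minset (PS k) T].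

Lemma minS_spec k : kset k \notin C -> minset (PS k) (minS k).
Proof.
move=> nk; rewrite /minS; case: pickP => [T h //|h] /=.
have [A hA] := @ex_minset _ (PS k) (ex_intro _ (kset k) (introT andP (conj (subxx _) nk))).
by have := h A; rewrite hA.
Qed.

Definition gk k := (minS k, [ffun x => (x \notin minS k) && k x]).

Lemma minS_sub k : kset k \notin C -> minS k \subset kset k.
Proof. by move/minS_spec/minsetp/andP => []. Qed.

Lemma gk_gen k : kset k \notin C -> gen_idxb C (gk k).
Proof.
move=> nk; have /minsetP [/andP [sub nS] mn] := minS_spec nk.
rewrite /gen_idxb /= nS /=; apply/andP; split.
  apply/forallP => T; apply/implyP => pT; apply/negPn/negP => nT.
  have /andP [sT _] := pT.
  have e : T = minS k by apply: mn => //; rewrite /PS nT (subset_trans sT sub).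
  by move: pT; rewrite e properxx.
by apply/forallP => x; apply/implyP => xS; rewrite ffunE xS.
Qed.

Lemma Kgk_self k : kset k \notin C ->
  Kvec R (gk k).1 (gk k).2 k = (-1) ^+ #|minS k|.
Proof.
move=> nk; rewrite KvecE /=; have sub := minS_sub nk.
have -> : condk (minS k) [ffun x => (x \notin minS k) && k x] k.
  by apply/forallP => x; apply/implyP => xS; rewrite ffunE xS.
by rewrite (setIidPl sub).
Qed.

Lemma Kgk_sub k k' : kset k \notin C ->
  Kvec R (gk k).1 (gk k).2 k' != 0 -> kset k' \subset kset k.
Proof.
move=> nk; rewrite KvecE /=; case: ifP => [/forallP cnd _|]; last by rewrite eqxx.
apply/subsetP => x; rewrite inE => kx.
case xS: (x \in minS k); first by apply: (subsetP (minS_sub nk)).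
by have := cnd x; rewrite ffunE xS kx /= => /eqP h; rewrite inE -h.
Qed.

Lemma reduce m : forall v : bvec n -> R,
  (forall k, (m <= #|kset k|)%N -> kset k \notin C -> v k = 0) ->
  exists c : {set 'I_n} * bvec n -> R, forall k, kset k \notin C ->
    v k = \sum_(g | gen_idxb C g) c g * Kvec R g.1 g.2 k.
Proof.
elim: m => [|m IH] v hv.
  exists (fun _ => 0) => k nk; rewrite hv // big1 // => g _; by rewrite mul0r.
pose P k := (#|kset k| == m) && (kset k \notin C).
pose corr k' := \sum_(k | P k) v k * (-1) ^+ #|minS k| * Kvec R (gk k).1 (gk k).2 k'.
pose v1 k' := v k' - corr k'.
have hv1 : forall k', (m <= #|kset k'|)%N -> kset k' \notin C -> v1 k' = 0.
  move=> k' mk nk'; rewrite /v1 /corr.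
  case: (ltnP m #|kset k'|) => [lt|le].
    rewrite hv // big1 ?subr0 // => k /andP [/eqP hk nk].
    case: (Kvec R (gk k).1 (gk k).2 k' =P 0) => [->|/eqP nz]; first by rewrite mulr0.
    have := subset_leq_card (Kgk_sub nk nz); lia.
  have Pk' : P k' by rewrite /P nk' andbT eqn_leq le mk.
  rewrite (bigD1 k') //= Kgk_self // -mulrA -expr2 sqrr_sign mulr1.
  rewrite big1 ?addr0 ?subrr // => k /andP [/andP [/eqP hk nk] nkk].
  case: (Kvec R (gk k).1 (gk k).2 k' =P 0) => [->|/eqP nz]; first by rewrite mulr0.
  have sub := Kgk_sub nk nz.
  have : kset k' == kset k by rewrite eqEcard sub hk; lia.
  by move/eqP/kset_inj => e; rewrite e eqxx in nkk.
have [c2 hc2] := IH v1 hv1.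
pose c1 g := \sum_(k | P k && (gk k == g)) v k * (-1) ^+ #|minS k|.
exists (fun g => c1 g + c2 g) => k nk.
have corrE : corr k = \sum_(g | gen_idxb C g) c1 g * Kvec R g.1 g.2 k.
  rewrite /corr (partition_big gk (gen_idxb C)); last first.
    by move=> k0 /andP [_ nk0]; apply: gk_gen.
  apply: eq_bigr => g _; rewrite /c1 big_distrl; apply: eq_bigr => k0 /andP [_ /eqP <-].
  by [].
transitivity (v1 k + corr k); first by rewrite /v1 subrK.
rewrite hc2 // corrE -big_split; apply: eq_bigr => g _; by rewrite mulrDl addrC.
Qed.

Lemma zero_part (w : bvec n -> R) : simplicial_complex C -> in_ker_AC C w ->
  (forall k, kset k \notin C -> w k = 0) -> forall k, w k = 0.
Proof.
move=> sc hker hz.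
suff: forall d k, (n - #|kset k| < d)%N -> w k = 0.
  by move=> h k; apply: (h (n - #|kset k|).+1).
elim=> [//|d IH] k hk.
case nk: (kset k \in C); last by apply: hz; rewrite nk.
have [F mF] := @ex_maxset _ (fun B => (B \in C) && (kset k \subset B))
    (ex_intro _ (kset k) (introT andP (conj nk (subxx _)))).
move/maxsetP: mF => [/andP [FC sF] maxF].
have fF : facet C F.
  split => // G GC sFG; apply: maxF => //; by rewrite GC (subset_trans sF sFG).
have supp : supported_on F k.
  move=> x xF; apply/negbTE/negP => kx; move/negP: xF; apply.
  by apply: (subsetP sF); rewrite inE.
have := hker F k fF supp.
rewrite (bigD1 k) //= big1 ?addr0.
  by rewrite /AC_entry; case: ifP => [_|/negbT/forallP []]; [rewrite mul1r|
     move=> x; apply/implyP].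
move=> k' nkk; rewrite /AC_entry; case: ifP => [/forallP h|]; last by rewrite mul0r.
rewrite mul1r; apply: IH.
have sub : kset k \subset kset k'.
  apply/subsetP => x; rewrite !inE => kx.
  have xF : x \in F by apply: (subsetP sF); rewrite inE.
  by have := h x; rewrite xF kx /= => /eqP <-.
have pr : kset k \proper kset k'.
  rewrite properEneq sub andbT; apply/negP => /eqP /kset_inj e.
  by rewrite e eqxx in nkk.
have := proper_card pr; have := max_card (kset k'); rewrite card_ord; lia.
Qed.
End H.

Theorem proposition3p6 (R : realFieldType) (n : nat) (C : {set {set 'I_n}}) :
  simplicial_complex C ->
  ((forall g : {set 'I_n} * {ffun 'I_n -> bool}, gen_idx C g ->
      in_ker_AC C (Kvec R g.1 g.2)) /\
   (forall v : {ffun 'I_n -> bool} -> R, in_ker_AC C v ->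
      exists c : {set 'I_n} * {ffun 'I_n -> bool} -> R,
        forall k, v k = \sum_(g | gen_idxb C g) c g * Kvec R g.1 g.2 k)) /\
  (exists (rs : {ffun 'I_n -> bool} -> bool)
          (cs : {set 'I_n} * {ffun 'I_n -> bool} -> bool),
      forall (g : {set 'I_n} * {ffun 'I_n -> bool}) (k : {ffun 'I_n -> bool}),
        gen_idx C g ->
        (-1) ^+ rs k * (-1) ^+ cs g * Kvec R g.1 g.2 k = Mvec R g.1 g.2 k).
Proof.
move=> sc.
have kerK : forall g : {set 'I_n} * bvec n, gen_idx C g -> in_ker_AC C (Kvec R g.1 g.2).
  move=> g [[nS _] _] F e fF _; exact: (@ker_part R n C g.1 g.2 F e sc nS fF).
split; [split => //|].
  move=> v hv.
  have [c hc] : exists c : {set 'I_n} * bvec n -> R, forall k, kset k \notin C ->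
      v k = \sum_(g | gen_idxb C g) c g * Kvec R g.1 g.2 k.
    apply: (@reduce R n C n.+1) => k hk _.
    by have := max_card (kset k); rewrite card_ord; lia.
  exists c => k.
  pose w k := v k - \sum_(g | gen_idxb C g) c g * Kvec R g.1 g.2 k.
  suff: w k = 0 by move/eqP; rewrite subr_eq0 => /eqP.
  apply: (zero_part sc); last by move=> k0 nk0; rewrite /w hc // subrr.
  move=> F e fF supp; rewrite /w.
  under eq_bigr => k0 _ do rewrite mulrBr.
  rewrite sumrB (hv F e fF supp) sub0r; apply/eqP; rewrite oppr_eq0; apply/eqP.
  under eq_bigr => k0 _ do rewrite big_distrr.
  rewrite exchange_big /= big1 // => g gb.
  have gi : gen_idx C g.
    move/and3P: gb => [nS /forallP pr /forallP sp]; split; first split => //.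
      by move=> T pT; have := pr T; rewrite pT.
    by move=> x; rewrite inE negbK => xS; have := sp x; rewrite xS => /negbTE.
  under eq_bigr => k0 _ do rewrite mulrCA.
  by rewrite -big_distrr /= (kerK g gi F e fF supp) mulr0.
exists (fun k => odd #|kset k|), (fun g => odd #|kset g.2|) => g k [_ sp].
apply: sign_part => x xS; apply: sp; by rewrite inE xS.
Qed.
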